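(* Let $X$ be the subshift obtained from the marker construction described in the context, and $\mu$ its unique shift-invariant Borel probability measure. Let $j\in\mathbb{N}$ and let $C_1,\dots,C_p$ be unpermuted words in $\mathcal{C}_j$ such that the concatenation $C_1\cdots C_p$ is a subword of some element of $\mathcal{C}_{j+1}$. Then $\mu([C_1]) = \mu([C_1\cdots C_p])$, where $[u] = \{x\in X : x_{[0,|u|)} = u\}$.
   Context: Marker construction. Let $l_1$ be a sufficiently large perfect square and $N_1 = 2^{\sqrt{l_1}}$. Let $\mathcal{C}_1$ be a set of $N_1$ binary words of length $l_1$, each beginning with $001$, such that the word $00$ occurs in each element of $\mathcal{C}_1$ only as its prefix. Inductively, given a set $\mathcal{C}_j$ of $N_j$ distinct words of length $l_j$ with an ordering $\mathcal{C}_j = \{u_1^{(j)},\dots,u_{N_j}^{(j)}\}$, let $P_j = \{2\}\cup\{i^2 : 2 \le i \le \lfloor\sqrt{N_j}\rfloor\}$, and let $\mathcal{C}_{j+1}$ be the set of all words $u^{(j)}_{\pi(1)}\cdots u^{(j)}_{\pi(N_j)}$ where $\pi$ ranges over permutations of $\{1,\dots,N_j\}$ fixing every element outside $P_j$. Thus $N_{j+1} = (\lfloor\sqrt{N_j}\rfloor)!$, $l_{j+1} = l_j N_j$. The ordering of $\mathcal{C}_{j+1}$ is arbitrary except that its first element is $u_1^{(j)}u_2^{(j)}\cdots u_{N_j}^{(j)}$. A word $u_i^{(j)}$ is permuted if $i \in P_j$ and unpermuted otherwise. $X \subset \{0,1\}^{\mathbb{Z}}$ is the set of bi-infinite sequences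 each finite subword of which is a subword of some word in $\bigcup_j \mathcal{C}_j$; it is uniquely ergodic. *)

(* Defs.v *)
From HB Require Import structures.
From mathcomp Require Import all_boot all_order all_algebra all_fingroup.
From mathcomp Require Import all_classical all_reals all_analysis.
Set Implicit Arguments. Unset Strict Implicit. Unset Printing Implicit Defensive.
Import Order.TTheory GRing.Theory Num.Theory.
Local Open Scope classical_set_scope.

(* [permuted_index N i]: the 1-based index i belongs to
   P = {2} ∪ {k^2 : 2 <= k <= floor(sqrt N)}  (k <= floor(sqrt N) <-> k*k <= N). *)
Definition permuted_index (N i : nat) : Prop :=
  i = 2%N \/ exists k : nat, (2 <= k)%N /\ (k * k <= N)%N /\ i = (k * k)%N.

(* u_{pi(1)} ... u_{pi(N)} for an ordered list Cj = [u_1; ...; u_N] (stored 0-based). *)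
Definition concat_perm (Cj : seq (seq bool)) (pi : 'S_(size Cj)) : seq bool :=
  flatten [seq nth [::] Cj (pi i) | i <- enum 'I_(size Cj)].

Arguments concat_perm : clear implicits.

Definition base_level (s : nat) (C1 : seq (seq bool)) : Prop :=
  uniq C1 /\ size C1 = (2 ^ s)%N /\
  forall w, w \in C1 ->
    [/\ size w = (s * s)%N,
        take 3 w = [:: false; false; true] &
        forall i : nat, (0 < i)%N -> nth true w i = false -> nth true w i.+1 = false -> False].

Definition next_level (Cj Cj1 : seq (seq bool)) : Prop :=
  [/\ uniq Cj1,
      head [::] Cj1 = flatten Cj &
      forall w, w \in Cj1 <->
        exists pi : 'S_(size Cj),
          (forall i : 'I_(size Cj), ~ permuted_index (size Cj) i.+1 -> pi i = i) /\
          w = concat_perm Cj pi].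

(* C n is the ordered list C_{n+1} of the paper (0-based levels). *)
Definition marker_construction (s : nat) (C : nat -> seq (seq bool)) : Prop :=
  base_level s (C 0%N) /\ forall j, next_level (C j) (C j.+1).

Definition unpermuted_in (Cj : seq (seq bool)) (w : seq bool) : Prop :=
  w \in Cj /\ ~ permuted_index (size Cj) (index w Cj).+1.

Definition window (x : int -> bool) (a : int) (n : nat) : seq bool :=
  [seq x (a + i%:Z)%R | i <- iota 0 n].

Definition subshift (C : nat -> seq (seq bool)) : set (int -> bool) :=
  [set x | forall (a : int) (n : nat), exists j w, w \in C j /\ infix (window x a n) w].

Definition shift (x : int -> bool) : int -> bool := fun n => x (n + 1)%R.

(* Cylinder sets {x : x_[a, a+|u|) = u}; they generate the Borel sigma-algebra
   of the product topology on {0,1}^Z. *)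
Definition cylinders : set (set (int -> bool)) :=
  [set A | exists (a : int) (u : seq bool), A = [set x | window x a (size u) = u]].

Definition Omega := g_sigma_algebraType cylinders.

Definition cyl (X : set Omega) (u : seq bool) : set Omega :=
  X `&` [set x | window x 0 (size u) = u].

Definition shift_invariant_on {R : realType} (X : set Omega)
    (mu : probability Omega R) : Prop :=
  mu X = 1%E /\ forall A : set Omega, measurable A -> mu (shift @^-1` A) = mu A.

(* Main.v *)
Require Import Defs.
From HB Require Import structures.
From mathcomp Require Import all_boot all_order all_algebra all_fingroup.
From mathcomp Require Import all_classical all_reals all_analysis.
From mathcomp Require Import zify.

Set Implicit Arguments. Unset Strict Implicit.

Definition pn (n : nat) (pi : 'S_n) (i : nat) : nat :=
  if (insub i : option 'I_n) is Some o then val (pi o) else i.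

Arguments pn {n}.

Lemma pn_val n (pi : 'S_n) (o : 'I_n) : pn pi (val o) = val (pi o).
Proof. by rewrite /pn valK. Qed.

Lemma pn_ord n (pi : 'S_n) i (hi : i < n) : pn pi i = val (pi (Ordinal hi)).
Proof. have := pn_val pi (Ordinal hi). by []. Qed.

Lemma pn_lt n (pi : 'S_n) i : i < n -> pn pi i < n.
Proof. move=> hi; rewrite (pn_ord pi hi); exact: ltn_ord. Qed.

Lemma pn_inj n (pi : 'S_n) i j : i < n -> j < n -> pn pi i = pn pi j -> i = j.
Proof. move=> hi hj; rewrite (pn_ord pi hi) (pn_ord pi hj) => /val_inj /perm_inj.
by move/(congr1 val). Qed.

Lemma pn_fix (Cj : seq (seq bool)) (pi : 'S_(size Cj)) i :
  (forall i : 'I_(size Cj), ~ permuted_index (size Cj) i.+1 -> pi i = i) ->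
  i < size Cj -> ~ permuted_index (size Cj) i.+1 -> pn pi i = i.
Proof. move=> H hi hp; rewrite (pn_ord pi hi). by rewrite (H (Ordinal hi)). Qed.

Lemma concat_perm_pn (Cj : seq (seq bool)) (pi : 'S_(size Cj)) :
  concat_perm Cj pi = flatten [seq nth [::] Cj (pn pi i) | i <- iota 0 (size Cj)].
Proof. rewrite /concat_perm -val_enum_ord -map_comp; congr flatten.
by apply: eq_map => o /=; rewrite pn_val. Qed.

Lemma concat_perm1 (Cj : seq (seq bool)) : concat_perm Cj 1 = flatten Cj.
Proof. rewrite concat_perm_pn; congr flatten.
rewrite [RHS](_ : Cj = mkseq (nth [::] Cj) (size Cj)); last by rewrite mkseq_nth.
rewrite /mkseq. apply/eq_in_map => i; rewrite mem_iota => /andP [_ hi].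
by rewrite (pn_ord _ hi) perm1. Qed.

Lemma unperm0 N : ~ permuted_index N 1.
Proof. case=> [//|[k [h1 [_ h3]]]]. nia. Qed.
Definition allsz (l : nat) (ws : seq (seq bool)) := forall x, x \in ws -> size x = l.

Lemma allsz_cons l x ws : allsz l (x :: ws) -> size x = l /\ allsz l ws.
Proof. move=> H; split; first by apply: H; rewrite mem_head.
by move=> y hy; apply: H; rewrite in_cons hy orbT. Qed.

Lemma size_flatten_c ws l : allsz l ws -> size (flatten ws) = size ws * l.
Proof. elim: ws => //= x ws IH /allsz_cons [H1 H2]. rewrite size_cat H1 IH //; lia. Qed.

Lemma drop_flatten_c ws l t : allsz l ws -> drop (t * l) (flatten ws) = flatten (drop t ws).
Proof. elim: ws t => [|x ws IH] t; first by [].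
move=> /allsz_cons [H1 H2]; case: t => [|t] /=; first by rewrite mul0n drop0.
rewrite drop_cat H1 ifF; last by lia.
by rewrite (_ : t.+1 * l - l = t * l) ?IH //; lia. Qed.

Lemma take_flatten_c ws l p : allsz l ws -> take (p * l) (flatten ws) = flatten (take p ws).
Proof. elim: ws p => [|x ws IH] p; first by [].
move=> /allsz_cons [H1 H2]; case: p => [|p] /=; first by rewrite mul0n take0.
rewrite take_cat H1 ifF; last by lia.
by rewrite (_ : p.+1 * l - l = p * l) ?IH //; lia. Qed.

Lemma flatten_inj_c l xs ys : 0 < l -> allsz l xs -> allsz l ys -> flatten xs = flatten ys -> xs = ys.
Proof. move=> lp; elim: xs ys => [|x xs IH] [|y ys] //=.
- move=> _ /allsz_cons [H1 _] E. have := congr1 size E. rewrite size_cat H1 /=. lia.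
- move=> /allsz_cons [H1 _] _ E. have := congr1 size E. rewrite size_cat H1 /=. lia.
move=> /allsz_cons [H1 H2] /allsz_cons [H3 H4] E.
have E1 : x = y. have := congr1 (take l) E. by rewrite !take_size_cat.
subst y. congr cons; apply: IH => //. by move/eqP: E; rewrite eqseq_cat // => /andP [_ /eqP]. Qed.

Lemma take_drop_in ws L t b n : allsz L ws -> t < size ws -> b + n <= L ->
  take n (drop (t * L + b) (flatten ws)) = take n (drop b (nth [::] ws t)).
Proof. move=> H ht hb.
have Hs : size (nth [::] ws t) = L by apply: H; rewrite mem_nth.
rewrite addnC -drop_drop drop_flatten_c // (drop_nth [::] ht) /= drop_cat Hs.
case: ltnP => hbL.
- rewrite takel_cat // size_drop Hs; lia.
- have -> : n = 0 by lia. by rewrite !take0. Qed.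

Lemma Gblk (Cj : seq (seq bool)) (pi : 'S_(size Cj)) l r p : allsz l Cj -> r + p <= size Cj ->
  take (p * l) (drop (r * l) (concat_perm Cj pi)) = flatten [seq nth [::] Cj (pn pi i) | i <- iota r p].
Proof. move=> H hrp.
have Hb : allsz l [seq nth [::] Cj (pn pi i) | i <- iota 0 (size Cj)].
  move=> x /mapP [i]; rewrite mem_iota => /andP [_ hi] ->. apply: H. by rewrite mem_nth // pn_lt.
rewrite concat_perm_pn drop_flatten_c // take_flatten_c; last first.
  by move=> x hx; apply: Hb; apply: mem_drop hx.
by rewrite -map_drop -map_take drop_iota take_iota add0n; congr (flatten (map _ (iota _ _))); lia.
Qed.

Definition allin (A ws : seq (seq bool)) := forall x, x \in ws -> x \in A.

Fixpoint ll (s : nat) (C : nat -> seq (seq bool)) m :=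
  match m with 0 => s * s | m.+1 => ll s C m * size (C m) end.

Section M.
Variables (s : nat) (C : nat -> seq (seq bool)).
Hypothesis Hb : base_level s (C 0).
Hypothesis Hn : forall j, next_level (C j) (C j.+1).

Lemma memC m w : w \in C m.+1 -> exists pi : 'S_(size (C m)),
  (forall i : 'I_(size (C m)), ~ permuted_index (size (C m)) i.+1 -> pi i = i) /\ w = concat_perm (C m) pi.
Proof. by case: (Hn m) => _ _ /(_ w) []. Qed.

Lemma nonempty m : 0 < size (C m).
Proof. case: m => [|m]. by case: Hb => _ [-> _]; rewrite expn_gt0.
case: (Hn m) => _ _ /(_ (flatten (C m))) [_ H].
have : flatten (C m) \in C m.+1. apply: H. exists 1%g; split; last by rewrite concat_perm1.
  by move=> i _; rewrite perm1.
by case: (C m.+1). Qed.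

Lemma uniqC m : uniq (C m).
Proof. case: m => [|m]; first by case: Hb. by case: (Hn m). Qed.

Lemma sizes m : allsz (ll s C m) (C m).
Proof. elim: m => [|m IH] w.
  by case: Hb => _ [_ H] /H [].
move=> /memC [pi [_ ->]]. rewrite concat_perm_pn /= (size_flatten_c (l := ll s C m)) ?size_map ?size_iota; first by rewrite mulnC.
move=> x /mapP [i]; rewrite mem_iota => /andP [_ hi] ->. apply: IH. by rewrite mem_nth // pn_lt.
Qed.

Lemma llpos m : 0 < ll s C m.
Proof. elim: m => [|m IH] /=; last by rewrite muln_gt0 IH nonempty.
case: Hb => _ [_ H]. have := nonempty 0. case E: (C 0) => [//|w ws] _.
have : w \in C 0 by rewrite E mem_head.
move=> /H [h1 h2 _]. have := congr1 size h2. rewrite size_take h1 /=. case: ifP => //; lia. Qed.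

Lemma ll_mono j k : j <= k -> ll s C j <= ll s C k.
Proof. elim: k => [|k IH]; first by rewrite leqn0 => /eqP ->.
rewrite leq_eqVlt => /orP [/eqP -> //|hj]. apply: leq_trans (IH hj) _ => /=.
by rewrite leq_pmulr // nonempty. Qed.

Lemma lower m ws : allin (C m.+1) ws -> exists B, allin (C m) B /\ flatten ws = flatten B.
Proof. elim: ws => [|w ws IH] H; first by exists [::].
have [B [HB E]] : exists B, allin (C m) B /\ flatten ws = flatten B.
  by apply: IH => x hx; apply: H; rewrite in_cons hx orbT.
have /memC [pi [_ Ew]] : w \in C m.+1 by apply: H; rewrite mem_head.
exists ([seq nth [::] (C m) (pn pi i) | i <- iota 0 (size (C m))] ++ B); split.
  move=> x; rewrite mem_cat => /orP [/mapP [i]|/HB //].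
  rewrite mem_iota => /andP [_ hi] ->. by rewrite mem_nth // pn_lt.
by rewrite /= E Ew concat_perm_pn flatten_cat. Qed.

Lemma lowerd m d ws : allin (C (d + m)) ws -> exists B, allin (C m) B /\ flatten ws = flatten B.
Proof. elim: d ws => [|d IH] ws H; first by exists ws.
have [B1 [H1 E1]] := lower (H : allin (C (d + m).+1) ws).
have [B2 [H2 E2]] := IH _ H1. exists B2; split => //. by rewrite E1. Qed.

Lemma nth_flat (ws : seq (seq bool)) L t c d : allsz L ws -> t < size ws -> c < L ->
  nth d (flatten ws) (t * L + c) = nth d (nth [::] ws t) c.
Proof. move=> H ht hc. rewrite -nth_drop drop_flatten_c // (drop_nth [::] ht) /= nth_cat.
by rewrite (H _ (mem_nth _ ht)) hc. Qed.

Lemma parse m ws v a : allin (C m) ws -> v \in C m -> take (ll s C m) (drop a (flatten ws)) = v ->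
  ll s C m %| a.
Proof.
elim: m ws v a => [|m IH] ws v a Hws Hv E.
- have lp := llpos 0. move: lp E; rewrite /=; set l := s * s => lp E.
  have Hwsz : allsz l ws by move=> x /Hws /(@sizes 0).
  have Hvs : size v = l by apply: (@sizes 0).
  have [_ [_ HC]] := Hb.
  have [_ vt _] := HC v Hv.
  have l3 : 3 <= l. have := congr1 size vt. rewrite size_take_min Hvs /=. lia.
  have hsize : a + l <= size ws * l.
    have := congr1 size E. rewrite size_take_min size_drop Hvs (size_flatten_c Hwsz). lia.
  have nthv i : i < l -> nth true v i = nth true (flatten ws) (a + i).
    by move=> hi; rewrite -E nth_take // nth_drop.
  have v0 : nth true v 0 = false by have := congr1 (nth true ^~ 0) vt; rewrite nth_take.
  have v1 : nth true v 1 = false by have := congr1 (nth true ^~ 1) vt; rewrite nth_take.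
  have v2 : nth true v 2 = true by have := congr1 (nth true ^~ 2) vt; rewrite nth_take.
  rewrite /dvdn; apply/eqP.
  have ha := divn_eq a l. have hb := ltn_pmod a lp.
  move: ha hb. set t := a %/ l; set b := a %% l => ha hb.
  case: (posnP b) => // bp.
  have ht : t < size ws by nia.
  have Hwt : nth [::] ws t \in C 0 by apply: Hws; rewrite mem_nth.
  have [_ _ H00] := HC _ Hwt.
  have w0 : nth true (nth [::] ws t) b = false.
    by rewrite -(nth_flat _ Hwsz) // -ha -v0 nthv // addn0.
  case: (ltnP b.+1 l) => hbl.
  + have w1 : nth true (nth [::] ws t) b.+1 = false.
      rewrite -(nth_flat _ Hwsz) // -v1 nthv; [by rewrite ha addn1 addnS | lia].
    by case: (H00 b).
  + have ht1 : t.+1 < size ws by nia.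
    have Hwt1 : nth [::] ws t.+1 \in C 0 by apply: Hws; rewrite mem_nth.
    have [_ vt1 _] := HC _ Hwt1.
    have w1 : nth true (nth [::] ws t.+1) 1 = false by have := congr1 (nth true ^~ 1) vt1; rewrite nth_take.
    have := v2; rewrite nthv; last by lia.
    rewrite (_ : a + 2 = t.+1 * l + 1); last by nia.
    rewrite (nth_flat _ Hwsz) //; [move=> h; move: w1; by rewrite h | lia].
- move: E; rewrite /=; set l := ll s C m; set N := size (C m) => E.
  have lp : 0 < l := llpos m. have Np : 0 < N := nonempty m.
  have [B [HB EB]] := lower Hws.
  have [piv [Hpv Ev]] := memC Hv.
  have u1 : take l v = nth [::] (C m) 0.
    have := Gblk piv (@sizes m) (r := 0) (p := 1). rewrite mul1n mul0n drop0 add0n /= cats0 -Ev => ->//.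
    by rewrite (pn_fix Hpv Np (@unperm0 _)).
  have E1 : take l (drop a (flatten ws)) = nth [::] (C m) 0.
    by rewrite -u1 -E take_takel // leq_pmulr.
  have hd : l %| a. apply: (IH B (nth [::] (C m) 0)) => //; first by rewrite mem_nth. by rewrite -EB.
  have L1p : 0 < l * N by rewrite muln_gt0 lp.
  have ha := divn_eq a (l * N). have hb := ltn_pmod a L1p.
  move: ha hb. set t := a %/ (l * N); set b := a %% (l * N) => ha hb.
  have hdb : l %| b. by rewrite -(dvdn_addr b (@dvdn_mull l t (l * N) (dvdn_mulr N (dvdnn l)))) -ha.
  have hbr := divnK hdb. move: hbr; set r := b %/ l => hbr.
  have hr : r < N by nia.
  have Hwsz : allsz (l * N) ws by move=> x /Hws /(@sizes m.+1).
  have hsize : a + l * N <= size ws * (l * N).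
    have := congr1 size E. rewrite size_take_min size_drop (size_flatten_c Hwsz) (sizes Hv) /=. lia.
  have ht : t < size ws by nia.
  have Hwt : nth [::] ws t \in C m.+1 by apply: Hws; rewrite mem_nth.
  have [pit [Hpt Et]] := memC Hwt.
  have E2 := E1. rewrite ha -hbr (take_drop_in Hwsz) // in E2; last by nia.
  have G := Gblk pit (@sizes m) (r:=r) (p:=1) ltac:(lia).
  rewrite mul1n -Et /= cats0 in G.
  rewrite G in E2. move/eqP: E2. rewrite nth_uniq ?uniqC // ?pn_lt // => /eqP h0.
  have r0 : r = 0.
    apply: (pn_inj (pi := pit) hr Np). by rewrite h0 (pn_fix Hpt Np (@unperm0 _)).
  rewrite /dvdn -/b; apply/eqP. by rewrite -hbr r0.
Qed.

Lemma window_take (x : int -> bool) a k n : take k (window x a n) = window x a (minn k n).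
Proof. by rewrite /window -map_take take_iota. Qed.

Lemma size_window (x : int -> bool) a n : size (window x a n) = n.
Proof. by rewrite /window size_map size_iota. Qed.

Lemma occ_of_infix (u w : seq bool) : infix u w -> exists a, take (size u) (drop a w) = u /\ a + size u <= size w.
Proof. move/infixP => [s1 [s2 ->]]. exists (size s1). rewrite drop_size_cat // take_size_cat //.
split => //. by rewrite !size_cat leq_add2l leq_addr. Qed.

Lemma main_incl j (Cs : seq (seq bool)) (x : int -> bool) :
  Cs != [::] -> (forall w, w \in Cs -> unpermuted_in (C j) w) ->
  (exists2 w, w \in C j.+1 & infix (flatten Cs) w) ->
  cyl (subshift C) (head [::] Cs) x -> cyl (subshift C) (flatten Cs) x.
Proof.
case: Cs => [//|C1 Cs'] _ Hun [w' Hw' Hinf] [hX hwin]; split => //.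
set Cs := C1 :: Cs' in Hun Hinf *. rewrite /= in hwin.
set N := size (C j). set l := ll s C j. set p := size Cs.
have lp : 0 < l := llpos j. have Np : 0 < N := nonempty j.
have HCs : allin (C j) Cs by move=> w /Hun [].
have Hsz : allsz l Cs by move=> w /HCs /(@sizes j).
set fc := flatten Cs.
have hn : size fc = p * l by rewrite (size_flatten_c Hsz).
have hC1 : size C1 = l by apply: Hsz; rewrite mem_head.
have pp : 0 < p by [].
have fc1 : take l fc = C1 by rewrite /fc /= take_size_cat.
have [a' [Ea' Sa']] := occ_of_infix Hinf. rewrite -/fc in Ea' Sa'.
have Hw1 : allin (C j.+1) [:: w'] by move=> z; rewrite mem_seq1 => /eqP ->.
have [B' [HB' EB']] := lower Hw1.
rewrite /= cats0 in EB'.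
have hd' : l %| a'.
  apply: (parse HB' (v := C1)); first by apply: HCs; rewrite mem_head.
  by rewrite -EB' -fc1 -Ea' take_takel // hn leq_pmull.
have hr' := divnK hd'. move: hr'; set r' := a' %/ l => hr'.
have Sw' : size w' = l * N by rewrite (@sizes j.+1 w' Hw').
have h1' : a' + p * l <= l * N by rewrite -hn -Sw'.
have hrp : r' + p <= N by nia.
have [pi' [Hp' Ew']] := memC Hw'.
have G' := Gblk pi' (@sizes j) (r := r') (p := p) hrp.
rewrite -Ew' hr' -hn Ea' in G'.
have Hs' : allsz l [seq nth [::] (C j) (pn pi' i) | i <- iota r' p].
  move=> z /mapP [i]; rewrite mem_iota => /andP [_ hi] ->. apply: (@sizes j). by rewrite mem_nth // pn_lt //; lia.
have ECs := flatten_inj_c lp Hsz Hs' G'.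
have fix' i : r' <= i < r' + p -> pn pi' i = i.
  move=> /andP [h1 h2]. have hi : i < N by lia.
  have hc : nth [::] (C j) (pn pi' i) \in Cs.
    rewrite ECs; apply/mapP; exists i => //; rewrite mem_iota; lia.
  have [_ hu] := Hun _ hc. rewrite index_uniq ?uniqC ?pn_lt // in hu.
  apply: (pn_inj (pi := pi')) => //; first by rewrite pn_lt.
  by rewrite (pn_fix Hp' _ hu) // pn_lt.
have ECs2 : Cs = [seq nth [::] (C j) i | i <- iota r' p].
  rewrite ECs; apply/eq_in_map => i; rewrite mem_iota => hi. by rewrite fix'.
have unp i : r' <= i < r' + p -> ~ permuted_index N i.+1.
  move=> /andP [h1 h2]. have hi : i < N by lia.
  have hc : nth [::] (C j) i \in Cs by rewrite ECs2; apply/mapP; exists i => //; rewrite mem_iota; lia.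
  have [_ hu] := Hun _ hc. by rewrite index_uniq ?uniqC in hu.
have C1r : C1 = nth [::] (C j) r'.
  have hp : p = (size Cs').+1 by [].
  have H0 : head [::] Cs = C1 by [].
  by rewrite ECs2 hp in H0.
have [k [w [Hw Hinfw]]] := hX 0%R (size fc).+1.
have [a [Ea Sa]] := occ_of_infix Hinfw.
rewrite size_window in Ea Sa.
have hk : j < k.
  rewrite ltnNge; apply/negP => hkj. have := ll_mono hkj. rewrite (@sizes k w Hw) in Sa.
  rewrite -/l. nia.
have Hw2 : allin (C (k - j.+1 + j.+1)) [:: w] by move=> z; rewrite mem_seq1 subnK // => /eqP ->.
have [ws [Hws Ews]] := lowerd Hw2.
rewrite /= cats0 in Ews.
have [B [HB EB]] := lower Hws.
have E1 : take l (drop a w) = C1.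
  have hl1 : l <= (size fc).+1 by rewrite hn; nia.
  have hl : minn l (size fc).+1 = l by apply/minn_idPl.
  rewrite -(take_takel _ hl1) Ea window_take hl.
  by rewrite -hC1.
have hd : l %| a by apply: (parse HB (v := C1)) => //; [apply: HCs; rewrite mem_head | rewrite -EB -Ews].
have L1p : 0 < l * N by rewrite muln_gt0 lp.
have ha := divn_eq a (l * N). have hb := ltn_pmod a L1p.
move: ha hb. set t := a %/ (l * N); set b := a %% (l * N) => ha hb.
have hdb : l %| b. by rewrite -(dvdn_addr b (@dvdn_mull l t (l * N) (dvdn_mulr N (dvdnn l)))) -ha.
have hbr := divnK hdb. move: hbr; set r := b %/ l => hbr.
have hr : r < N by nia.
have Hwsz : allsz (l * N) ws by move=> z /Hws /(@sizes j.+1).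
have Sw : @size bool w = size ws * (l * N) by rewrite Ews (size_flatten_c Hwsz).
have h2 : a < size ws * (l * N) by move: Sa Sw; lia.
have ht : t < size ws by nia.
have Hwt : nth [::] ws t \in C j.+1 by apply: Hws; rewrite mem_nth.
have [pit [Hpt Et]] := memC Hwt.
have E2 := E1. rewrite Ews ha -hbr (take_drop_in Hwsz) // in E2; last by nia.
have G := Gblk pit (@sizes j) (r:=r) (p:=1) ltac:(lia).
rewrite mul1n -Et /= cats0 in G.
have hr'N : r' < size (C j) by move: hrp pp; rewrite -/N; lia.
rewrite G C1r in E2. move/eqP: E2. rewrite nth_uniq ?uniqC ?pn_lt // => /eqP h0.
have rr : r = r'.
  apply: (pn_inj (pi := pit) hr) => //.
  by rewrite h0 (pn_fix Hpt _ (unp _ _)) //; rewrite leqnn /= -/N; lia.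
change (window x 0%R (size fc) = fc).
have -> : window x 0%R (size fc) = take (size fc) (drop a w).
  by rewrite -(take_takel _ (leqnSn (size fc))) Ea window_take (minn_idPl (leqnSn _)).
rewrite Ews ha -hbr (take_drop_in Hwsz) //; last by nia.
rewrite hn Et (Gblk pit (@sizes j)); last by lia.
rewrite /fc ECs2 rr; congr flatten; apply/eq_in_map => i; rewrite mem_iota => hi.
rewrite (pn_fix Hpt) //; first by lia. by apply: unp; lia.
Qed.

End M.

Unset Implicit Arguments.

Theorem lemma4p3 :
  exists L : nat,
  forall (s : nat) (C : nat -> seq (seq bool)),
    (L <= s * s)%N ->
    marker_construction s C ->
  forall (R : realType) (mu : probability Omega R),
    shift_invariant_on (subshift C) mu ->
    (forall nu : probability Omega R, shift_invariant_on (subshift C) nu ->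
       forall A : set Omega, measurable A -> nu A = mu A) ->
  forall (j : nat) (Cs : seq (seq bool)),
    Cs != [::] ->
    (forall w, w \in Cs -> unpermuted_in (C j) w) ->
    (exists2 w, w \in C j.+1 & infix (flatten Cs) w) ->
    mu (cyl (subshift C) (head [::] Cs)) = mu (cyl (subshift C) (flatten Cs)).
Proof.
exists 0%N. move=> s C _ [Hb Hn] R mu _ _ j Cs hne Hun Hw.
have -> : cyl (subshift C) (head [::] Cs) = cyl (subshift C) (flatten Cs); last by [].
apply/seteqP; split => x hx.
- exact: (main_incl Hb Hn hne Hun Hw hx).
- case: Cs hne Hun Hw hx => [//|C1 Cs'] _ _ _ [hX hw]; split => //.
  change (window x 0%R (size C1) = C1).
  change (window x 0%R (size (C1 ++ flatten Cs')) = C1 ++ flatten Cs') in hw.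
  have := congr1 (take (size C1)) hw.
  rewrite window_take take_size_cat // (minn_idPl _) //.
  by rewrite size_cat leq_addr.
Qed.
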